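(* Let $\mathcal{B}$ be a complete topological ring and let $\mathrm{e}\colon\mathcal{B}\to\mathcal{B}\{T\}$ be a restricted exponential homomorphism. Then the compositions $\varphi=\pi_{(1)}\circ\mathrm{e}\colon\mathcal{B}\to\mathcal{B}$ and $\psi=\pi_{(-1)}\circ\mathrm{e}\colon\mathcal{B}\to\mathcal{B}$ are continuous ring automorphisms of $\mathcal{B}$ inverse to each other, where $\pi_{(\pm1)}\colon\mathcal{B}\{T\}\to\mathcal{B}$ is the continuous $\mathcal{B}$-algebra homomorphism $\sum_ib_iT^i\mapsto\sum_ib_i(\pm1)^i$.
   Context: Conventions: topological rings are linearly topologized with a countable fundamental system of open ideals; homomorphisms are continuous; complete means the canonical map to $\varprojlim_{\mathfrak{a}}\mathcal{B}/\mathfrak{a}$ (open ideals, discrete quotients) is a topological isomorphism. $\mathcal{B}\{T\}$, $\mathcal{B}\{T,T'\}$ denote restricted power series over $\mathcal{B}$ (coefficients converging to $0$, so the sums above converge), topologized by the ideals of series with all coefficients in a given open ideal. A restricted exponential homomorphism is a continuous ring homomorphism $\mathrm{e}\colon\mathcal{B}\to\mathcal{B}\{T\}$, $\mathrm{e}(b)=\sum_i\mathrm{e}_i(b)T^i$, with $\mathrm{e}_0=\mathrm{id}$ and $\sum_{i,j}\mathrm{e}_j(\mathrm{e}_i(b))T'^jT^i=\sum_\ell\mathrm{e}_\ell(b)(T+T')^\ell$ for all $b$. *)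

(* Defs.v *)
From HB Require Import structures.
From mathcomp Require Import all_boot all_order all_algebra.
Set Implicit Arguments. Unset Strict Implicit. Unset Printing Implicit Defensive.
Import GRing.Theory.
Local Open Scope ring_scope.

(* A (commutative) ring B linearly topologized by a countable fundamental
   system of open ideals, taken (w.l.o.g.) decreasing: a 0 ⊇ a 1 ⊇ ... .
   Ideals are represented as predicates B -> Prop. *)

Definition is_ideal (B : comPzRingType) (I : B -> Prop) : Prop :=
  [/\ I 0, (forall x y, I x -> I y -> I (x - y)) & (forall r x, I x -> I (r * x))].

Definition lin_top (B : comPzRingType) (a : nat -> B -> Prop) : Prop :=
  (forall n, is_ideal (a n)) /\ (forall n x, a n.+1 x -> a n x).

(* Completeness: the canonical map B -> lim_n B / a n is bijective
   (it is then automatically a topological isomorphism).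
   Injective: separatedness; surjective: every compatible family of
   representatives (x_{n+1} = x_n mod a n) lifts. *)
Definition complete (B : comPzRingType) (a : nat -> B -> Prop) : Prop :=
  (forall x : B, (forall n, a n x) -> x = 0) /\
  (forall x : nat -> B, (forall n, a n (x n.+1 - x n)) ->
     exists y : B, forall n, a n (y - x n)).

Definition continuous_top (B : comPzRingType) (a : nat -> B -> Prop) (f : B -> B) : Prop :=
  forall (x : B) (n : nat), exists m : nat, forall y : B, a m (y - x) -> a n (f y - f x).

Definition restricted (B : comPzRingType) (a : nat -> B -> Prop) (u : nat -> B) : Prop :=
  forall n, exists N, forall i, (N <= i)%N -> a n (u i).

Definition series_to (B : comPzRingType) (a : nat -> B -> Prop) (u : nat -> B) (s : B) : Prop :=
  forall n, exists N, forall k, (N <= k)%N -> a n (\sum_(i < k) u i - s).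

Definition ring_hom (B : comPzRingType) (f : B -> B) : Prop :=
  [/\ forall x y, f (x + y) = f x + f y, forall x y, f (x * y) = f x * f y & f 1 = 1].

(* A restricted exponential homomorphism  e : B -> B{T},  e b = sum_i (e b i) T^i.
   - e b is a restricted power series;
   - e is continuous for the topology on B{T} given by the ideals a n {T};
   - e is a ring homomorphism (addition/Cauchy product/unit coefficientwise);
   - e_0 = id;
   - sum_{i,j} e_j(e_i b) T'^j T^i = sum_l e_l(b) (T+T')^l in B{T,T'}, i.e.
     comparing the coefficients of T'^j T^i: e_j(e_i b) = C(i+j,i) e_{i+j}(b). *)
Definition restricted_exp_hom (B : comPzRingType) (a : nat -> B -> Prop)
    (e : B -> nat -> B) : Prop :=
  [/\ forall b, restricted a (e b),
      forall (x : B) (n : nat), exists m : nat,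
        forall y : B, a m (y - x) -> forall i, a n (e y i - e x i),
      forall b c i, e (b + c) i = e b i + e c i &
      forall b c i, e (b * c) i = \sum_(j < i.+1) e b j * e c (i - j)%N] /\
  [/\ forall i, e 1 i = (i == 0%N)%:R,
      forall b, e b 0%N = b &
      forall b i j, e (e b i) j = 'C(i + j, i)%:R * e b (i + j)%N].

(* Main.v *)
Require Import Defs.
From HB Require Import structures.
From mathcomp Require Import all_boot all_order all_algebra.
From mathcomp Require Import zify.
From Stdlib Require Import IndefiniteDescription.
Set Implicit Arguments. Unset Strict Implicit.
Import GRing.Theory.
Local Open Scope ring_scope.

Definition E (B : comPzRingType) (e : B -> nat -> B) (c : B) (b : B) (i : nat) :=
  c ^+ i * e b i.

Section Aux.
Variable B : comPzRingType.
Variable a : nat -> B -> Prop.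
Hypothesis Ha : lin_top a.

Lemma a0 n : a n 0. Proof. by case: (Ha.1 n). Qed.
Lemma aB n x y : a n x -> a n y -> a n (x - y).
Proof. by case: (Ha.1 n) => _ H _; apply: H. Qed.
Lemma aN n x : a n x -> a n (- x).
Proof. move=> H; rewrite -sub0r; apply: aB => //; exact: a0. Qed.
Lemma aD n x y : a n x -> a n y -> a n (x + y).
Proof. move=> Hx Hy; rewrite -[y]opprK; apply: aB => //; exact: aN. Qed.
Lemma aMl n r x : a n x -> a n (r * x).
Proof. by case: (Ha.1 n) => _ _ H; apply: H. Qed.
Lemma aMr n r x : a n x -> a n (x * r).
Proof. by rewrite mulrC; apply: aMl. Qed.
Lemma asum n I (r : seq I) (P : pred I) (F : I -> B) :
  (forall i, P i -> a n (F i)) -> a n (\sum_(i <- r | P i) F i).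
Proof. move=> H; apply: (big_ind (a n)); [exact: a0| exact: aD | exact: H]. Qed.
Lemma asymm n x y : a n (x - y) -> a n (y - x).
Proof. by move=>/aN; rewrite opprB. Qed.
Lemma atrans n x y z : a n (x - y) -> a n (y - z) -> a n (x - z).
Proof. move=> H1 H2; have := aD H1 H2; by rewrite addrA subrK. Qed.

Lemma tail n (u : nat -> B) N k : (N <= k)%N ->
  (forall i, (N <= i)%N -> (i < k)%N -> a n (u i)) ->
  a n (\sum_(i < k) u i - \sum_(i < N) u i).
Proof.
move=> Hk H.
rewrite -!(big_mkord xpredT) (@big_cat_nat _ _ _ N 0 k _ _ (leq0n N) Hk) /= addrAC subrr add0r.
rewrite big_nat_cond; apply: asum => i /andP[/andP[H1 H2] _]; exact: H.
Qed.

Lemma series_unique (Hc : complete a) u s t :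
  series_to a u s -> series_to a u t -> s = t.
Proof.
move=> Hs Ht; apply/eqP; rewrite -subr_eq0; apply/eqP; apply: Hc.1 => n.
case: (Hs n) => N1 H1; case: (Ht n) => N2 H2.
exact: (atrans (asymm (H1 (maxn N1 N2) (leq_maxl _ _))) (H2 _ (leq_maxr _ _))).
Qed.

Lemma series_exists (Hc : complete a) u : restricted a u -> exists s, series_to a u s.
Proof.
move=> Hu; have [N HN] := functional_choice _ Hu.
pose M n := (\sum_(k < n.+1) N k)%N.
have MS n : M n.+1 = (M n + N n.+1)%N by rewrite /M big_ord_recr.
have MN n : (N n <= M n)%N.
  by case: n => [|n]; rewrite ?MS ?leq_addl // /M big_ord1.
have Mmono n : (M n <= M n.+1)%N by rewrite MS leq_addr.
have [y Hy] := Hc.2 (fun n => \sum_(i < M n) u i)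
  (fun n => tail (Mmono n) (fun i Hi _ => HN n i (leq_trans (MN n) Hi))).
exists y => n; exists (M n) => k Hk.
exact: (atrans (tail Hk (fun i Hi _ => HN n i (leq_trans (MN n) Hi))) (asymm (Hy n))).
Qed.

Lemma series_add u v s t : series_to a u s -> series_to a v t ->
  series_to a (fun i => u i + v i) (s + t).
Proof.
move=> Hs Ht n; case: (Hs n) => N1 H1; case: (Ht n) => N2 H2.
exists (maxn N1 N2) => k; rewrite geq_max => /andP[k1 k2].
rewrite big_split /= opprD addrACA; apply: aD; [exact: H1 | exact: H2].
Qed.

Lemma series_ext u v s : (forall i, u i = v i) -> series_to a u s -> series_to a v s.
Proof.
move=> Euv H n; case: (H n) => N HN; exists N => k Hk.
under eq_bigr => i _ do rewrite -Euv. exact: HN.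
Qed.

Lemma triangle k (f : nat -> nat -> B) :
  \sum_(i < k) \sum_(j < i.+1) f j (i - j)%N = \sum_(j < k) \sum_(l < k - j) f j l.
Proof.
elim: k => [|k IH]; first by rewrite !big_ord0.
rewrite [LHS]big_ord_recr /= IH [RHS]big_ord_recr /= subSnn big_ord1.
rewrite [in RHS](eq_bigr (fun j : 'I_k => \sum_(l < k - j) f j l + f j (k - j)%N)); last first.
  move=> j _; rewrite subSn; last exact: ltnW (ltn_ord j).
  by rewrite big_ord_recr.
by rewrite big_split /= [in LHS]big_ord_recr /= subnn addrA.
Qed.

Lemma series_mul u v s t : restricted a u -> restricted a v ->
  series_to a u s -> series_to a v t ->
  series_to a (fun i => \sum_(j < i.+1) u j * v (i - j)%N) (s * t).
Proof.
move=> Ru Rv Hs Ht n.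
case: (Ru n) => N1 H1; case: (Rv n) => N2 H2; case: (Hs n) => N3 H3; case: (Ht n) => N4 H4.
exists (N1 + N2 + N3 + N4)%N => k Hk.
rewrite (triangle k (fun j l => u j * v l)).
under eq_bigr do rewrite -mulr_sumr.
apply: (@atrans _ _ ((\sum_(j<k) u j) * (\sum_(l<k) v l))).
  rewrite mulr_suml -sumrB; apply: asum => j _; rewrite -mulrBr.
  case: (ltnP j N1) => Hj.
    apply: aMl; apply: asymm; apply: tail; first by lia.
    move=> i Hi _; apply: H2; lia.
  by apply: aMr; apply: H1.
have -> : (\sum_(j<k) u j) * (\sum_(l<k) v l) - s * t =
   (\sum_(j<k) u j - s) * (\sum_(l<k) v l) + s * (\sum_(l<k) v l - t).
  by rewrite mulrBl mulrBr addrA subrK.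
apply: aD; [apply: aMr; apply: H3 | apply: aMl; apply: H4]; lia.
Qed.

End Aux.

Section Main.
Variable B : comPzRingType.
Variable a : nat -> B -> Prop.
Variable e : B -> nat -> B.
Hypothesis Ha : lin_top a.
Hypothesis Hc : complete a.
Hypothesis Hr : forall b, restricted a (e b).
Hypothesis Hcont : forall (x : B) (n : nat), exists m : nat,
        forall y : B, a m (y - x) -> forall i, a n (e y i - e x i).
Hypothesis Hadd : forall b c i, e (b + c) i = e b i + e c i.
Hypothesis Hmul : forall b c i, e (b * c) i = \sum_(j < i.+1) e b j * e c (i - j)%N.
Hypothesis He1 : forall i, e 1 i = (i == 0%N)%:R.
Hypothesis He0 : forall b, e b 0%N = b.
Hypothesis Hee : forall b i j, e (e b i) j = 'C(i + j, i)%:R * e b (i + j)%N.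

Lemma e0 j : e 0 j = 0.
Proof. apply: (@addrI _ (e 0 j)); by rewrite -Hadd !addr0. Qed.

Lemma eN x j : e (- x) j = - e x j.
Proof. apply: (@addrI _ (e x j)); by rewrite -Hadd !subrr e0. Qed.

Lemma esum j K (F : nat -> B) : e (\sum_(i < K) F i) j = \sum_(i < K) e (F i) j.
Proof.
by apply: (big_morph (fun x => e x j)) => [x y|]; rewrite ?Hadd ?e0.
Qed.

Lemma E_restricted c b : restricted a (E e c b).
Proof.
move=> n; case: (Hr b n) => N HN; exists N => i Hi; apply: aMl => //; exact: HN.
Qed.

Lemma F_hom c F : (forall b, series_to a (E e c b) (F b)) ->
  ring_hom F /\ continuous_top a F.
Proof.
move=> HF; split; first split.
- move=> x y; apply: (series_unique Ha Hc (HF (x + y))).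
  apply: series_ext (series_add Ha (HF x) (HF y)) => i.
  by rewrite /E Hadd mulrDr.
- move=> x y; apply: (series_unique Ha Hc (HF (x * y))).
  apply: series_ext (series_mul Ha (E_restricted c x) (E_restricted c y) (HF x) (HF y)) => i.
  rewrite /E Hmul mulr_sumr; apply: eq_bigr => j _.
  by rewrite mulrACA -exprD subnKC // -ltnS.
- apply: (series_unique Ha Hc (HF 1)) => n; exists 1%N => k Hk.
  case: k Hk => [//|k] _.
  rewrite big_ord_recl /E He1 /= expr0 mul1r big1 ?addr0 ?subrr; first exact: a0.
  by move=> i _; rewrite He1 /= mulr0.
- move=> x n; case: (Hcont x n) => m Hm; exists m => y Hy.
  case: (HF y n) => N1 H1; case: (HF x n) => N2 H2.
  apply: (atrans Ha (asymm Ha (H1 (N1 + N2)%N (leq_addr _ _)))).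
  apply: (atrans Ha _ (H2 (N1 + N2)%N (leq_addl _ _))).
  rewrite -sumrB; apply: asum => // i _; rewrite /E -mulrBr; apply: aMl => //; exact: Hm.
Qed.

Lemma F_inv c d F G : (forall i x j, e (c ^+ i * x) j = c ^+ i * e x j) -> c + d = 0 ->
  (forall b, series_to a (E e c b) (F b)) -> (forall b, series_to a (E e d b) (G b)) ->
  forall b, G (F b) = b.
Proof.
move=> Hsc cd HF HG b.
apply/eqP; rewrite -subr_eq0; apply/eqP; apply: Hc.1 => n.
case: (Hcont (F b) n) => m Hm.
case: (Hr b n) => N1 HN1.
case: (HF b m) => N2 HN2.
case: (HG (F b) n) => N3 HN3.
pose K := (N1 + N2 + N3).+1.
pose y := \sum_(i < K) E e c b i.
have Hy j : a n (e (F b) j - e y j).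
  apply: asymm => //; apply: Hm; apply: HN2; rewrite /K; lia.
have ey j : e y j = \sum_(i<K) c^+i * ('C(i+j,i)%:R * e b (i+j)%N).
  by rewrite /y esum; apply: eq_bigr => i _; rewrite /E Hsc Hee.
have HK3 : (N3 <= K)%N by rewrite /K; lia.
apply: (atrans Ha (asymm Ha (HN3 K HK3))).
apply: (@atrans _ _ Ha _ _ (\sum_(j<K) d^+j * e y j)).
  rewrite -sumrB; apply: asum => // j _; rewrite /E -mulrBr; apply: aMl => //; exact: Hy.
under eq_bigr do rewrite ey mulr_sumr.
rewrite exchange_big /=.
pose f i j := d^+j * (c^+i * ('C(i+j,i)%:R * e b (i+j)%N)).
apply: (@atrans _ _ Ha _ _ (\sum_(i<K) \sum_(j < K - i) f i j)).
  rewrite -sumrB; apply: asum => // i _; apply: (tail Ha (u := f i)); first exact: leq_subr.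
  move=> j Hj _; rewrite /f; apply: aMl => //; apply: aMl => //; apply: aMl => //.
  apply: HN1; have := ltn_ord i; move: Hj; rewrite /K => Hj Hi; lia.
rewrite -(triangle K f).
have -> : \sum_(l < K) \sum_(i < l.+1) f i (l - i)%N = \sum_(l<K) ((l : nat) == 0%N)%:R * e b l.
  apply: eq_bigr => l _.
  transitivity (\sum_(i<l.+1) (d^+(l-i) * c^+i * 'C(l,i)%:R) * e b l).
    apply: eq_bigr => i _; rewrite /f subnKC; last by rewrite -ltnS.
    by rewrite !mulrA.
  rewrite -mulr_suml; congr (_ * _).
  transitivity ((d + c) ^+ l); last by rewrite addrC cd expr0n.
  rewrite exprDn; apply: eq_bigr => i _; by rewrite mulr_natr.
rewrite /K big_ord_recl /= He0 mul1r big1 ?addr0 ?subrr; first exact: a0.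
by move=> i _; rewrite mul0r.
Qed.

End Main.

Theorem proposition2p11 (B : comPzRingType) (a : nat -> B -> Prop) (e : B -> nat -> B) :
  lin_top a -> complete a -> restricted_exp_hom a e ->
  exists phi psi : B -> B,
    [/\ forall b, series_to a (e b) (phi b),
        forall b, series_to a (fun i => (-1) ^+ i * e b i) (psi b),
        ring_hom phi /\ continuous_top a phi,
        ring_hom psi /\ continuous_top a psi &
        cancel phi psi /\ cancel psi phi].
Proof.
move=> Ha Hc [[Hr Hcont Hadd Hmul] [He1 He0 Hee]].
have ex c : exists F : B -> B, forall b, series_to a (E e c b) (F b).
  apply: (functional_choice (fun b s => series_to a (E e c b) s)) => b.
  apply: series_exists => //; exact: E_restricted.
have [phi Hphi] := ex 1; have [psi Hpsi] := ex (-1).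
have Hs1 i x j : e (1 ^+ i * x) j = 1 ^+ i * e x j by rewrite expr1n !mul1r.
have Hs2 i x j : e ((-1) ^+ i * x) j = (-1) ^+ i * e x j.
  rewrite -signr_odd; case: (odd i); rewrite ?expr0 ?expr1 ?mul1r ?mulN1r //.
  exact: (eN Hadd).
exists phi, psi; split.
- move=> b; apply: series_ext (Hphi b) => i; by rewrite /E expr1n mul1r.
- exact: Hpsi.
- exact: (F_hom Ha Hc Hr Hcont Hadd Hmul He1 Hphi).
- exact: (F_hom Ha Hc Hr Hcont Hadd Hmul He1 Hpsi).
- split => b.
  + apply: (F_inv Ha Hc Hr Hcont Hadd He0 Hee Hs1 _ Hphi Hpsi); exact: subrr.
  + apply: (F_inv Ha Hc Hr Hcont Hadd He0 Hee Hs2 _ Hpsi Hphi); exact: addNr.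
Qed.
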